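(* Let $f$ be a real-valued symmetric ternary tensor in $(\mathbb{C}^3)^{\otimes 3}$, and suppose there exist $\beta,\gamma\in\mathbb{C}^3$ with $\beta\neq 0$, $\langle\beta,\beta\rangle=0$, and a complex symmetric ternary tensor $f_\beta$ with $\langle f_\beta,\beta\rangle=0$, such that $$f=f_\beta+\beta^{\otimes 2}\otimes\gamma+\beta\otimes\gamma\otimes\beta+\gamma\otimes\beta^{\otimes 2}.$$ Then there exist a $3\times 3$ real orthogonal matrix $T$ and $\lambda\in\mathbb{R}$ such that $T^{\otimes 3}f=\lambda\, e_3^{\otimes 3}$. In particular, $f=\alpha^{\otimes 3}$ for some $\alpha\in\mathbb{R}^3$.
   Context: Ternary signatures on a 3-element domain are identified with tensors in $(\mathbb{C}^3)^{\otimes 3}$; symmetric means invariant under permutation of the arguments. For $u,v\in\mathbb{C}^n$, $\langle u,v\rangle=\sum_j u_jv_j$ (bilinear, no conjugation). For a symmetric tensor $g$ of arity $r\ge1$ and a vector $u$, $\langle g,u\rangle$ is the arity-$(r-1)$ tensor obtained by contracting one (any) index of $g$ with $u$, i.e. $\langle g,u\rangle_{j_2\dots j_r}=\sum_{j} g_{j j_2\dots j_r}u_j$. $e_3=(0,0,1)^T$. *)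

(* Defs.v *)
From HB Require Import structures.
From mathcomp Require Import all_boot all_order all_algebra.
From mathcomp Require Import complex.
Set Implicit Arguments. Unset Strict Implicit. Unset Printing Implicit Defensive.
Import Order.TTheory GRing.Theory Num.Theory.
Local Open Scope ring_scope.
Local Open Scope complex_scope.

Definition tensor3 (K : Type) := 'I_3 -> 'I_3 -> 'I_3 -> K.

(* Symmetric: invariant under all permutations of the arguments
   (generated by the two adjacent transpositions). *)
Definition symmetric3 (K : Type) (f : tensor3 K) : Prop :=
  forall i j k, f i j k = f j i k /\ f i j k = f i k j.

Definition bil (K : nzRingType) (u v : 'I_3 -> K) : K := \sum_(j < 3) u j * v j.

Definition contract3 (K : nzRingType) (g : tensor3 K) (u : 'I_3 -> K)
  : 'I_3 -> 'I_3 -> K := fun j2 j3 => \sum_(j < 3) g j j2 j3 * u j.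

Definition tprod3 (K : nzRingType) (a b c : 'I_3 -> K) : tensor3 K :=
  fun i j k => a i * b j * c k.

Definition orthogonal_mx (R : nzRingType) (T : 'M[R]_3) : Prop :=
  T *m T^T = 1%:M.

Definition act3 (R : rcfType) (T : 'M[R]_3) (f : tensor3 R[i]) : tensor3 R[i] :=
  fun a b c => \sum_(i < 3) \sum_(j < 3) \sum_(k < 3)
     (T a i)%:C * (T b j)%:C * (T c k)%:C * f i j k.

Definition e3 (K : nzRingType) : 'I_3 -> K := fun i => if val i == 2%N then 1 else 0.

(* Main.v *)
Require Import Defs.
From HB Require Import structures.
From mathcomp Require Import all_boot all_order all_algebra.
From mathcomp Require Import complex polyrcf.
From mathcomp Require Import ring lra.
Set Implicit Arguments. Unset Strict Implicit. Unset Printing Implicit Defensive.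
Import Order.TTheory GRing.Theory Num.Theory.
Local Open Scope ring_scope.
Local Open Scope complex_scope.

Definition o0 : 'I_3 := @Ordinal 3 0 isT.
Definition o1 : 'I_3 := @Ordinal 3 1 isT.
Definition o2 : 'I_3 := @Ordinal 3 2 isT.

Lemma sum3 (K : nmodType) (F : 'I_3 -> K) : \sum_(i < 3) F i = F o0 + F o1 + F o2.
Proof. rewrite !big_ord_recl big_ord0 addr0 addrA. by congr (F _ + F _ + F _); apply: val_inj. Qed.

Lemma ord3 (i : 'I_3) : i = o0 \/ i = o1 \/ i = o2.
Proof.
case: i => [[|[|[|m]]] H].
- by left; apply/val_inj.
- by right; left; apply/val_inj.
- by right; right; apply/val_inj.
- by [].
Qed.

Lemma lin_comb (K : comNzRingType) (L Rr X B c : K) :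
  L - Rr = X + c * B -> X = 0 -> B = 0 -> L = Rr.
Proof. by move=> E hX hB; apply/eqP; rewrite -subr_eq0 E hX hB mulr0 addr0. Qed.

Notation cRe := (@complex.Re _).
Notation cIm := (@complex.Im _).
Lemma ReD (R : rcfType) (x y : R[i]) : cRe (x + y) = cRe x + cRe y.
Proof. by case: x; case: y. Qed.
Lemma ImD (R : rcfType) (x y : R[i]) : cIm (x + y) = cIm x + cIm y.
Proof. by case: x; case: y. Qed.
Lemma ReM (R : rcfType) (x y : R[i]) : cRe (x * y) = cRe x * cRe y - cIm x * cIm y.
Proof. by case: x; case: y. Qed.
Lemma ImM (R : rcfType) (x y : R[i]) : cIm (x * y) = cRe x * cIm y + cIm x * cRe y.
Proof. by case: x => a b; case: y => c d /=; rewrite addrC. Qed.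
Lemma Re_sum (R : rcfType) (F : 'I_3 -> R[i]) : cRe (\sum_(i<3) F i) = \sum_(i<3) cRe (F i).
Proof. by rewrite !sum3 !ReD. Qed.
Lemma Im_sum (R : rcfType) (F : 'I_3 -> R[i]) : cIm (\sum_(i<3) F i) = \sum_(i<3) cIm (F i).
Proof. by rewrite !sum3 !ImD. Qed.

Lemma cube_root (R : rcfType) (l : R) : exists m : R, m ^+ 3 = l.
Proof.
have hs : ~~ odd (size ('X^3 - l%:P : {poly R})) by rewrite size_XnsubC.
have [x /rootP hx] := odd_poly_root hs.
by exists x; move: hx; rewrite !hornerE => /eqP; rewrite subr_eq0 => /eqP.
Qed.

Definition dot (R : rcfType) (x y : 'I_3 -> R) := \sum_(l<3) x l * y l.
Definition wv (R : rcfType) (a b : 'I_3 -> R) (n : R) : 'I_3 -> R := fun l =>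
  match nat_of_ord l with
  | 0 => (a o1 * b o2 - a o2 * b o1) / n
  | 1 => (a o2 * b o0 - a o0 * b o2) / n
  | _ => (a o0 * b o1 - a o1 * b o0) / n end.
Definition Tm (R : rcfType) (a b : 'I_3 -> R) (r : R) : 'M[R]_3 :=
  \matrix_(i, j) match nat_of_ord i with
  | 0 => a j / r | 1 => b j / r | _ => wv a b (r * r) j end.

Lemma Tm_orth (R : rcfType) (a b : 'I_3 -> R) (r : R) : r != 0 ->
  dot a a = r * r -> dot b b = r * r -> dot a b = 0 ->
  Tm a b r *m (Tm a b r)^T = 1%:M.
Proof.
move=> hr; rewrite /dot !sum3 => ha hb hab.
have hrr : r * r != 0 by rewrite mulf_neq0.
apply/matrixP => i j; rewrite !mxE sum3 !mxE.
case: (ord3 i) => [->|[->|->]]; case: (ord3 j) => [->|[->|->]]; rewrite /= /wv /=.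
- by transitivity ((a o0 * a o0 + a o1 * a o1 + a o2 * a o2) / (r * r)); [field | rewrite ha divff].
- by transitivity ((a o0 * b o0 + a o1 * b o1 + a o2 * b o2) / (r * r)); [field | rewrite hab mul0r].
- by field.
- by transitivity ((a o0 * b o0 + a o1 * b o1 + a o2 * b o2) / (r * r)); [field | rewrite hab mul0r].
- by transitivity ((b o0 * b o0 + b o1 * b o1 + b o2 * b o2) / (r * r)); [field | rewrite hb divff].
- by field.
- by field.
- by field.
- transitivity (((a o0 * a o0 + a o1 * a o1 + a o2 * a o2) * (b o0 * b o0 + b o1 * b o1 + b o2 * b o2) - (a o0 * b o0 + a o1 * b o1 + a o2 * b o2) ^+ 2) / ((r * r) * (r * r))); first by field.
  by rewrite ha hb hab expr0n /= subr0 divff // mulf_neq0.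
Qed.

Lemma delta_sum (R : rcfType) (h : 'I_3 -> R) i : h i = \sum_(l<3) (i == l)%:R * h l.
Proof.
rewrite (bigD1 i) //= eqxx mul1r big1 ?addr0 // => l /negPf.
by rewrite eq_sym => ->; rewrite mul0r.
Qed.

Lemma decomp (R : rcfType) (T : 'M[R]_3) (h : 'I_3 -> R) : T^T *m T = 1%:M ->
  \sum_(l<3) T o0 l * h l = 0 -> \sum_(l<3) T o1 l * h l = 0 ->
  forall i, h i = T o2 i * \sum_(l<3) T o2 l * h l.
Proof.
move=> TT h0 h1 i; rewrite delta_sum.
transitivity (\sum_(l<3) \sum_(m<3) T m i * (T m l * h l)).
  apply: eq_bigr => l _; have := congr1 (fun M : 'M[R]_3 => M i l) TT; rewrite !mxE => <-.
  by rewrite mulr_suml; apply: eq_bigr => m _; rewrite !mxE mulrA.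
rewrite exchange_big /=; under eq_bigr => m _ do rewrite -mulr_sumr.
by rewrite sum3 h0 h1 !mulr0 !add0r.
Qed.

Lemma swap0 (R : rcfType) (x y : 'I_3 -> R) (F : 'I_3 -> 'I_3 -> R) :
  (forall m, \sum_(l<3) x l * F m l = 0) ->
  \sum_(l<3) x l * (\sum_(m<3) y m * F m l) = 0.
Proof.
move=> H.
transitivity (\sum_(l<3) \sum_(m<3) y m * (x l * F m l)).
  by apply: eq_bigr => l _; rewrite mulr_sumr; apply: eq_bigr => m _; ring.
rewrite exchange_big /=; under eq_bigr => m _ do rewrite -mulr_sumr H mulr0.
by rewrite big1.
Qed.

Theorem mainTheorem4 (R : rcfType) (f : tensor3 R[i])
  (f_real : forall i j k, f i j k \is Num.real)
  (f_sym : symmetric3 f)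
  (beta gamma : 'I_3 -> R[i]) (fb : tensor3 R[i])
  (beta_nz : exists j, beta j != 0)
  (beta_iso : bil beta beta = 0)
  (fb_sym : symmetric3 fb)
  (fb_beta : forall j2 j3, contract3 fb beta j2 j3 = 0)
  (f_dec : forall i j k,
     f i j k = fb i j k + tprod3 beta beta gamma i j k
             + tprod3 beta gamma beta i j k + tprod3 gamma beta beta i j k) :
  (exists (T : 'M[R]_3) (lam : R), orthogonal_mx T /\
     forall a b c, act3 T f a b c = lam%:C * tprod3 (@e3 _) (@e3 _) (@e3 _) a b c)
  /\ (exists alpha : 'I_3 -> R, forall i j k,
        f i j k = tprod3 (fun t => (alpha t)%:C) (fun t => (alpha t)%:C)
                         (fun t => (alpha t)%:C) i j k).
Proof.
have [c hc] : exists c, c = \sum_(l<3) gamma l * beta l by eexists.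
have K : forall j k, \sum_(l<3) f l j k * beta l = c * beta j * beta k.
  move=> j k; have hX := fb_beta j k; move: beta_iso hX.
  rewrite /contract3 /bil hc !sum3 !f_dec /tprod3 => hB hX.
  by apply: (lin_comb (c := beta j * gamma k + gamma j * beta k) _ hX hB); ring.
have hfc : forall i j k, conjc (f i j k) = f i j k.
  by move=> i j k; rewrite -(RRe_real (f_real i j k)) conjc_real.
have Kc : forall j k, \sum_(l<3) f l j k * conjc (beta l)
                      = conjc c * conjc (beta j) * conjc (beta k).
  move=> j k; have := congr1 conjc (K j k); rewrite rmorph_sum !rmorphM /= => <-.
  by apply: eq_bigr => l _; rewrite rmorphM /= hfc.
have [N hN] : exists N, N = \sum_(j<3) beta j * conjc (beta j) by eexists.
have S : forall k, c * beta k * N = conjc c * conjc (beta k) * N.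
  move=> k.
  have E1 : \sum_(j<3) (\sum_(l<3) f l j k * beta l) * conjc (beta j) = c * beta k * N.
    under eq_bigr => j _ do rewrite K.
    by rewrite hN mulr_sumr; apply: eq_bigr => j _; ring.
  have E2 : \sum_(l<3) (\sum_(j<3) f j l k * conjc (beta j)) * beta l
          = conjc c * conjc (beta k) * N.
    under eq_bigr => l _ do rewrite Kc.
    by rewrite hN mulr_sumr; apply: eq_bigr => l _; ring.
  rewrite -E1 -E2.
  under eq_bigr => j _ do rewrite mulr_suml.
  under [RHS]eq_bigr => l _ do rewrite mulr_suml.
  rewrite exchange_big; apply: eq_bigr => l _; apply: eq_bigr => j _.
  by rewrite (proj1 (f_sym l j k)); ring.
have N0 : N != 0.
  apply/negP; rewrite hN => /eqP /psumr_eq0P H.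
  case: beta_nz => j hj.
  have := H (fun j _ => mulcJ_ge0 (beta j)) j isT.
  by move/eqP; rewrite mulf_eq0 conjc_eq0 orbb (negPf hj).
have c0 : c = 0.
  have : c * (N * N) = 0.
    transitivity (\sum_(k<3) c * beta k * N * conjc (beta k)).
      by rewrite [X in _ * (_ * X)]hN !mulr_sumr; apply: eq_bigr => k _; ring.
    under eq_bigr => k _ do rewrite S.
    transitivity (conjc c * N * conjc (bil beta beta)).
      rewrite /bil rmorph_sum mulr_sumr; apply: eq_bigr => k _; rewrite rmorphM; ring.
    by rewrite beta_iso rmorph0 mulr0.
  by move/eqP; rewrite mulf_eq0 mulf_eq0 orbb (negPf N0) orbF => /eqP.
have Kz : forall j k, \sum_(l<3) f l j k * beta l = 0.
  by move=> j k; rewrite K c0 !mul0r.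
have [g hf] : exists g : 'I_3 -> 'I_3 -> 'I_3 -> R, forall i j k, f i j k = (g i j k)%:C.
  by exists (fun i j k => cRe (f i j k)) => i j k; rewrite RRe_real.
have [a [b hbe]] : exists a b : 'I_3 -> R, forall l, beta l = a l +i* b l.
  by exists (fun l => cRe (beta l)), (fun l => cIm (beta l)) => l; case: (beta l).
have Ga : forall j k, \sum_(l<3) a l * g l j k = 0.
  move=> j k; transitivity (cRe (\sum_(l<3) f l j k * beta l)); last by rewrite Kz.
  by rewrite Re_sum; apply: eq_bigr => l _; rewrite hf hbe /= mul0r subr0 mulrC.
have Gb : forall j k, \sum_(l<3) b l * g l j k = 0.
  move=> j k; transitivity (cIm (\sum_(l<3) f l j k * beta l)); last by rewrite Kz.
  by rewrite Im_sum; apply: eq_bigr => l _; rewrite hf hbe /= mul0r addr0 mulrC.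
have hRe : dot a a = dot b b.
  have := congr1 cRe beta_iso; rewrite /bil Re_sum /dot !sum3 !hbe /= => H.
  lra.
have hab : dot a b = 0.
  have := congr1 cIm beta_iso; rewrite /bil Im_sum /dot !sum3 !hbe /= => H.
  lra.
have hn : 0 < dot a a.
  case: beta_nz => j; rewrite hbe => hj.
  have hj2 : 0 < a j ^+ 2 + b j ^+ 2.
    rewrite lt_def addr_ge0 ?sqr_ge0 // andbT paddr_eq0 ?sqr_ge0 // !sqrf_eq0.
    by apply: contra hj => /andP [/eqP -> /eqP ->].
  move: hRe hj2; rewrite /dot !sum3 => H.
  by case: (ord3 j) => [->|[->|->]]; nra.
have [r hr] : exists r, r = Num.sqrt (dot a a) by eexists.
have hrr : r * r = dot a a by rewrite hr -expr2 sqr_sqrtr // ltW.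
have hr0 : r != 0 by rewrite hr gt_eqF // sqrtr_gt0.
have TTt : Tm a b r *m (Tm a b r)^T = 1%:M.
  by apply: Tm_orth => //; rewrite -?hRe.
have TtT : (Tm a b r)^T *m Tm a b r = 1%:M by apply: mulmx1C.
have [T hT] : exists T, T = Tm a b r by eexists.
rewrite -hT in TTt TtT.
have Z0 : forall h : 'I_3 -> R, \sum_(l<3) a l * h l = 0 -> \sum_(l<3) T o0 l * h l = 0.
  move=> h H; transitivity ((\sum_(l<3) a l * h l) / r); last by rewrite H mul0r.
  by rewrite mulr_suml; apply: eq_bigr => l _; rewrite hT mxE /= mulrAC.
have Z1 : forall h : 'I_3 -> R, \sum_(l<3) b l * h l = 0 -> \sum_(l<3) T o1 l * h l = 0.
  move=> h H; transitivity ((\sum_(l<3) b l * h l) / r); last by rewrite H mul0r.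
  by rewrite mulr_suml; apply: eq_bigr => l _; rewrite hT mxE /= mulrAC.
have gs1 : forall i j k, g i j k = g j i k.
  by move=> i j k; apply: complexI; rewrite -!hf (proj1 (f_sym i j k)).
have gs2 : forall i j k, g i j k = g i k j.
  by move=> i j k; apply: complexI; rewrite -!hf (proj2 (f_sym i j k)).
have P1 : forall j k, \sum_(l<3) T o0 l * g l j k = 0 /\ \sum_(l<3) T o1 l * g l j k = 0.
  by move=> j k; split; [apply: Z0 | apply: Z1].
have P2 : forall j k, \sum_(l<3) T o0 l * g j l k = 0 /\ \sum_(l<3) T o1 l * g j l k = 0.
  by move=> j k; split; under eq_bigr => l _ do rewrite gs1; [exact: (proj1 (P1 j k)) | exact: (proj2 (P1 j k))].
have P3 : forall j k, \sum_(l<3) T o0 l * g j k l = 0 /\ \sum_(l<3) T o1 l * g j k l = 0.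
  by move=> j k; split; under eq_bigr => l _ do rewrite gs2; [exact: (proj1 (P2 j k)) | exact: (proj2 (P2 j k))].
pose H j k := \sum_(l<3) T o2 l * g l j k.
have H1 : forall i j k, g i j k = T o2 i * H j k.
  by move=> i j k; apply: (decomp (h := fun l => g l j k) TtT); case: (P1 j k).
pose Kk k := \sum_(m<3) T o2 m * H m k.
have H2 : forall j k, H j k = T o2 j * Kk k.
  move=> j k; apply: (decomp (h := fun l => H l k) TtT).
    by apply: swap0 => m; case: (P2 m k).
  by apply: swap0 => m; case: (P2 m k).
pose lam := \sum_(p<3) T o2 p * Kk p.
have H3 : forall k, Kk k = T o2 k * lam.
  move=> k; apply: (decomp (h := Kk) TtT).
    by apply: swap0 => m; apply: swap0 => p; case: (P3 p m).
  by apply: swap0 => m; apply: swap0 => p; case: (P3 p m).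
have gfin : forall i j k, g i j k = lam * (T o2 i * T o2 j * T o2 k).
  by move=> i j k; rewrite H1 H2 H3; ring.
have Tw : forall x, (\sum_(i<3) T x i * T o2 i)%:C = e3 (R[i]) x.
  move=> x; have := congr1 (fun M : 'M[R]_3 => M x o2) TTt; rewrite !mxE /=.
  under eq_bigr => i _ do rewrite mxE.
  move=> ->; rewrite /e3.
  by case: (ord3 x) => [->|[->|->]].
split.
  exists T, lam; split; first exact: TTt.
  move=> x y z; rewrite /act3 /tprod3 -!Tw.
  under eq_bigr => i _ do under eq_bigr => j _ do under eq_bigr => k _ do rewrite hf gfin.
  by rewrite !sum3 !rmorphD !rmorphM; ring.
have [m hm] := cube_root lam.
exists (fun t => m * T o2 t) => i j k.
by rewrite hf gfin /tprod3 -!rmorphM -hm; congr (_ %:C); ring.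
Qed.
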